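(* Let $\Gamma=(H,\iota,\sigma,m)$ be a skew Brauer graph, $H'\subseteq H$ stable under $\iota$, and $(h_1,r_1),(h_2,r_2)$ two distinct maximal sectors of elements of $H'$ in $\Gamma$. For any $0$-homogeneous grading $d:H\to\mathbb{Z}/2\mathbb{Z}$ of $\Gamma$, $$\mu^+_{(h_1,r_1)}\big(\mu^+_{(h_2,r_2)}(\Gamma,d)\big)=\mu^+_{(h_2,r_2)}\big(\mu^+_{(h_1,r_1)}(\Gamma,d)\big).$$
   Context: A skew Brauer graph is $\Gamma=(H,\iota,\sigma,m)$ with $H$ finite, $\iota$ an involution (possibly with fixed points; $H_\times$ = set of fixed points, $H_\circ=H\setminus H_\times$), $\sigma$ a permutation, $m:H\to\mathbb{Z}_{>0}$ constant on $\sigma$-orbits; no half-edge is fixed by both $\iota$ and $\sigma$. A grading $d:H\to\mathbb{Z}/2\mathbb{Z}$ is $0$-homogeneous if $\sum_{h\in v}d(h)=0$ for every $\sigma$-orbit $v$. A sector of elements of $H'$ is a pair $(h,r)\in H\times\mathbb{Z}_{\ge0}$ with $r+1$ the least $r'\ge0$ such that $\sigma^{r'}h\notin H'$; it is maximal if also $\sigma^{-1}h\notin H'$. The graded generalized Kauer move of a sector is $\mu^+_{(h,r)}(\Gamma,d)=(H,\iota,\sigma_{(h,r)},m_{(h,r)},d_{(h,r)})$ where $\sigma_{(h,r)}=(h\ \ \sigma^{r+1}h)\circ\sigma\circ(\sigma^rh\ \ \iota\sigma^{r+1}h)$ (permutations applied right to left), $m_{(h,r)}(\sigma^ih)=m(\iota\sigma^{r+1}h)$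 for $0\le i\le r$, $m_{(h,r)}=m$ elsewhere, and, with $\epsilon=0$ if $\sigma^{r+1}h\in H_\circ$ and $\epsilon=1$ if $\sigma^{r+1}h\in H_\times$: $d_{(h,r)}(\iota\sigma^{r+1}h)=-\sum_{i=0}^rd(\sigma^ih)-\epsilon$; $d_{(h,r)}(\sigma^rh)=d(\iota\sigma^{r+1}h)+d(\sigma^rh)+\epsilon$ if $\iota\sigma^{r+1}h\ne\sigma^{-1}h$, and $=\sum_{i=-1}^rd(\sigma^ih)+d(\sigma^rh)+\epsilon$ otherwise; $d_{(h,r)}(\sigma^{-1}h)=\sum_{i=-1}^rd(\sigma^ih)$ if $\iota\sigma^{r+1}h\ne\sigma^{-1}h$, and $=d_{(h,r)}(\iota\sigma^{r+1}h)$ otherwise; $d_{(h,r)}(h')=d(h')$ for all other $h'$. The result is again a $0$-homogeneous graded skew Brauer graph, and a maximal sector distinct from $(h,r)$ remains a sector after the move, so both sides are defined. *)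

(* Defs.v *)
From HB Require Import structures.
From mathcomp Require Import all_boot all_order all_fingroup all_algebra.
Set Implicit Arguments. Unset Strict Implicit. Unset Printing Implicit Defensive.
Import GRing.Theory.
Local Open Scope ring_scope.

(* Half-edges: a finType H.  iota, sigma : {perm H}.
   Permutations in MathComp compose left-to-right: (p * q) x = q (p x). *)

Section SkewBrauer.
Variable H : finType.

Definition is_skew_brauer (iota sigma : {perm H}) (m : {ffun H -> nat}) : Prop :=
  [/\ forall x, iota (iota x) = x,
      forall x, (0 < m x)%N,
      forall x y, y \in porbit sigma x -> m y = m x
    & forall x, ~ (iota x = x /\ sigma x = x)].

Definition zero_homogeneous (sigma : {perm H}) (d : {ffun H -> 'Z_2}) : Prop :=
  forall x, \sum_(y in porbit sigma x) d y = 0.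

Definition is_sector (sigma : {perm H}) (H' : {set H}) (h : H) (r : nat) : Prop :=
  (forall i, (i <= r)%N -> (sigma ^+ i)%g h \in H') /\ (sigma ^+ r.+1)%g h \notin H'.

Definition is_maximal_sector (sigma : {perm H}) (H' : {set H}) (h : H) (r : nat) : Prop :=
  is_sector sigma H' h r /\ (sigma^-1)%g h \notin H'.

Record gsbg := GSBG {
  g_iota : {perm H};
  g_sigma : {perm H};
  g_m : {ffun H -> nat};
  g_d : {ffun H -> 'Z_2} }.

Definition kauer_move (G : gsbg) (h : H) (r : nat) : gsbg :=
  let iota := g_iota G in
  let sigma := g_sigma G in
  let m := g_m G in
  let d := g_d G in
  let s i := (sigma ^+ i)%g h in
  let t := s r.+1 in
  let a := iota t in
  let b := s r in
  let c := (sigma^-1)%g h in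
  let eps : 'Z_2 := (iota t == t)%:R in   (* 1 iff sigma^{r+1} h in H_x *)
  let S := \sum_(i < r.+1) d (s i) in
  (* sigma' = (h  t) o sigma o (b  a), composing right to left *)
  let sigma' := (tperm b a * sigma * tperm h t)%g in
  let m' := [ffun x => if [exists i : 'I_r.+1, x == s (nat_of_ord i)]
                       then m a else m x] in
  let da := - S - eps in
  let d' := [ffun x =>
      if x == a then da
      else if x == b then
        (if a != c then d a + d b + eps else (d c + S) + d b + eps)
      else if x == c then
        (if a != c then d c + S else da)
      else d x] in
  GSBG iota sigma' m' d'.

End SkewBrauer.

(* Main.v *)
Require Import Defs.
From mathcomp Require Import all_boot all_order all_fingroup all_algebra.
From mathcomp Require Import ring.
Set Implicit Arguments. Unset Strict Implicit. Unset Printing Implicit Defensive.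
Import GRing.Theory.
Local Open Scope ring_scope.

Section Aux.
Variable H : finType.

Definition km (G : gsbg H) (h t b c : H) (seg : {set H}) (S : 'Z_2) : gsbg H :=
  let iota := g_iota G in let sigma := g_sigma G in let m := g_m G in let d := g_d G in
  let a := iota t in
  let eps : 'Z_2 := (iota t == t)%:R in
  let da := - S - eps in
  GSBG iota (tperm b a * sigma * tperm h t)%g
    [ffun x => if x \in seg then m a else m x]
    [ffun x =>
      if x == a then da
      else if x == b then
        (if a != c then d a + d b + eps else (d c + S) + d b + eps)
      else if x == c then
        (if a != c then d c + S else da)
      else d x].

Lemma kauer_moveE (G : gsbg H) h r :
  kauer_move G h r = km G h ((g_sigma G ^+ r.+1)%g h) ((g_sigma G ^+ r)%g h) (((g_sigma G)^-1)%g h)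
     [set x | [exists i : 'I_r.+1, x == (g_sigma G ^+ i)%g h]]
     (\sum_(i < r.+1) g_d G ((g_sigma G ^+ i)%g h)).
Proof.
rewrite /kauer_move /km; congr GSBG; apply/ffunP => x; by rewrite !ffunE ?inE.
Qed.

Lemma tpermC2 (x y u v : H) : x != u -> x != v -> y != u -> y != v ->
  (tperm x y * tperm u v = tperm u v * tperm x y)%g.
Proof.
move=> xu xv yu yv; have ux : u != x by rewrite eq_sym.
have vx : v != x by rewrite eq_sym. have uy : u != y by rewrite eq_sym.
have vy : v != y by rewrite eq_sym.
apply/permP => z; rewrite !permM.
have [->|zx] := eqVneq z x; first by rewrite tpermL (tpermD uy vy) (tpermD ux vx) tpermL.
have [->|zy] := eqVneq z y; first by rewrite tpermR (tpermD uy vy) (tpermD ux vx) tpermR.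
have [->|zu] := eqVneq z u; first by rewrite tpermL (tpermD xu yu) (tpermD xv yv) tpermL.
have [->|zv] := eqVneq z v; first by rewrite tpermR (tpermD xu yu) (tpermD xv yv) tpermR.
by rewrite !tpermD // eq_sym.
Qed.

Lemma oppZ2 (x : 'Z_2) : - x = x.
Proof. by case: x => [[|[|]]] //= ?; apply/val_inj. Qed.

Lemma km_comm (G : gsbg H) (h1 t1 b1 c1 : H) (seg1 : {set H}) (S1 : 'Z_2) (h2 t2 b2 c2 : H) (seg2 : {set H}) (S2 : 'Z_2) :
  let iota := g_iota G in
  let a1 := iota t1 in let a2 := iota t2 in
  [/\ b1 != b2, b1 != a2, a1 != b2 & a1 != a2] ->
  [/\ h1 != h2, h1 != t2, t1 != h2 & t1 != t2] ->
  [/\ a1 \notin seg2, a2 \notin seg1 & forall x, x \in seg1 -> x \notin seg2] ->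
  [/\ a1 != b1, a2 != b2, c1 != b1 & c1 != b2] ->
  [/\ c2 != b1, c2 != b2 & c1 != c2] ->
  km (km G h2 t2 b2 c2 seg2 S2) h1 t1 b1 (tperm b2 a2 c1) seg1 S1 =
  km (km G h1 t1 b1 c1 seg1 S1) h2 t2 b2 (tperm b1 a1 c2) seg2 S2.
Proof.
move=> iota a1 a2 [ne1 ne2 ne3 ne4] [ne5 ne6 ne7 ne8] [n1 n2 n3]
  [e1 e2 e3 e4] [e5 e6 e7].
rewrite /km /=; congr GSBG.
- by rewrite !mulgA (tpermC2 ne1 ne2 ne3 ne4) -(mulgA _ (tperm h2 t2)) -(tpermC2 ne5 ne6 ne7 ne8) !mulgA.
- apply/ffunP => x; rewrite !ffunE -/iota -/a1 -/a2 (negbTE n1) (negbTE n2).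
  case: ifP => // /n3 /negbTE -> //.
apply/ffunP => x; rewrite !ffunE -/iota -/a1 -/a2.
move: (g_d G) ((a1 == t1)%:R : 'Z_2) ((a2 == t2)%:R : 'Z_2) => d E1 E2.
have T1 : tperm b2 a2 c1 = if c1 == a2 then b2 else c1.
  by case: eqP => [->|/eqP ?]; [rewrite tpermR | rewrite tpermD // eq_sym].
have T2 : tperm b1 a1 c2 = if c2 == a1 then b1 else c2.
  by case: eqP => [->|/eqP ?]; [rewrite tpermR | rewrite tpermD // eq_sym].
rewrite T1 T2; clear T1 T2 n1 n2 n3 ne5 ne6 ne7 ne8.
clearbody a1 a2.
move: ne1 ne2 ne3 ne4 e1 e2 e3 e4 e5 e6 e7.
move=> /eqP ? /eqP ? /eqP ? /eqP ? /eqP ? /eqP ? /eqP ? /eqP ? /eqP ? /eqP ? /eqP ?.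
have [Ea|/eqP Na] := eqVneq c1 a2; try rewrite Ea eqxx; try rewrite (introF eqP Na);
  have [Eb|/eqP Nb] := eqVneq c2 a1; try rewrite Eb eqxx; try rewrite (introF eqP Nb); subst;
  repeat (case: eqP => [?|?]; subst => //=).
all: ring.
Qed.

Lemma permSr (s : {perm H}) k x : (s ^+ k.+1)%g x = s ((s ^+ k)%g x).
Proof. by rewrite expgSr permM. Qed.

Lemma shift_eq (s : {perm H}) x y i j : (i <= j)%N -> (s ^+ i)%g x = (s ^+ j)%g y ->
  x = (s ^+ (j - i))%g y.
Proof.
move=> le E; apply: (@perm_inj _ (s ^+ i)%g); rewrite E -permM -expgD.
by rewrite subnK.
Qed.

Lemma sector_r_uniq (s : {perm H}) H' h r1 r2 :
  is_sector s H' h r1 -> is_sector s H' h r2 -> r1 = r2.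
Proof.
move=> [I1 O1] [I2 O2]; case: (ltngtP r1 r2) => // lt.
- by move: O1; rewrite I2.
- by move: O2; rewrite I1.
Qed.

Lemma sec_disj (s : {perm H}) H' h1 r1 h2 r2 :
  is_maximal_sector s H' h1 r1 -> is_maximal_sector s H' h2 r2 ->
  (h1, r1) <> (h2, r2) ->
  forall i j, (i <= r1)%N -> (j <= r2)%N -> (s ^+ i)%g h1 != (s ^+ j)%g h2.
Proof.
have key : forall h1 r1 h2 r2, is_maximal_sector s H' h1 r1 -> is_maximal_sector s H' h2 r2 ->
  (h1, r1) <> (h2, r2) ->
  forall i j, (i <= j)%N -> (i <= r1)%N -> (j <= r2)%N -> (s ^+ i)%g h1 != (s ^+ j)%g h2.
  move=> {}h1 {}r1 {}h2 {}r2 [S1 C1] [S2 C2] ne i j ij ir jr; apply/eqP => E.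
  have := shift_eq ij E; case E2: (j - i)%N => [|k].
    rewrite expg0 perm1 => eh; subst h2; apply: ne; congr pair.
    exact: sector_r_uniq S1 S2.
  move=> eh; move: C1; rewrite eh permSr permK.
  case: S2 => In2 _; rewrite In2 //; apply: leq_trans jr; by move: (leq_subr i j); rewrite E2 => /ltnW.
move=> M1 M2 ne i j ir jr; case: (leqP i j) => ij; first exact: (key _ _ _ _ M1 M2 ne i j ij ir jr).
rewrite eq_sym; apply: (key _ _ _ _ M2 M1 _ j i (ltnW ij) jr ir).
by move=> [E1 E2]; apply: ne; rewrite E1 E2.
Qed.

End Aux.

Lemma iter_agree (H : finType) (s s' : {perm H}) x n :
  (forall i, (i < n)%N -> s' ((s ^+ i)%g x) = s ((s ^+ i)%g x)) ->
  forall i, (i <= n)%N -> (s' ^+ i)%g x = (s ^+ i)%g x.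
Proof.
move=> E; elim=> [|i IH] lt; first by rewrite !expg0 !perm1.
by rewrite !permSr IH ?E // ltnW.
Qed.

Lemma other_sector (H : finType) (G : gsbg H) (H' : {set H}) h1 r1 h2 r2 :
  (forall x, g_iota G (g_iota G x) = x) -> (forall x, x \in H' -> g_iota G x \in H') ->
  is_maximal_sector (g_sigma G) H' h1 r1 -> is_maximal_sector (g_sigma G) H' h2 r2 ->
  (forall i j, (i <= r1)%N -> (j <= r2)%N -> (g_sigma G ^+ i)%g h1 != (g_sigma G ^+ j)%g h2) ->
  let G2 := km G h2 ((g_sigma G ^+ r2.+1)%g h2) ((g_sigma G ^+ r2)%g h2) (((g_sigma G)^-1)%g h2)
     [set x | [exists i : 'I_r2.+1, x == (g_sigma G ^+ i)%g h2]]
     (\sum_(i < r2.+1) g_d G ((g_sigma G ^+ i)%g h2)) in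
  [/\ forall i, (i <= r1.+1)%N -> (g_sigma G2 ^+ i)%g h1 = (g_sigma G ^+ i)%g h1,
      ((g_sigma G2)^-1)%g h1 = tperm ((g_sigma G ^+ r2)%g h2) (g_iota G ((g_sigma G ^+ r2.+1)%g h2)) (((g_sigma G)^-1)%g h1),
      [set x | [exists i : 'I_r1.+1, x == (g_sigma G2 ^+ i)%g h1]] =
        [set x | [exists i : 'I_r1.+1, x == (g_sigma G ^+ i)%g h1]]
    & \sum_(i < r1.+1) g_d G2 ((g_sigma G2 ^+ i)%g h1) = \sum_(i < r1.+1) g_d G ((g_sigma G ^+ i)%g h1)].
Proof.
set sigma := g_sigma G; set iota := g_iota G.
move=> Hinv Hst [[In1 Out1] C1] [[In2 Out2] C2] D G2.
set t2 := (sigma ^+ r2.+1)%g h2; set b2 := (sigma ^+ r2)%g h2.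
set a2 := iota t2; set c2 := (sigma^-1)%g h2.
set t1 := (sigma ^+ r1.+1)%g h1.
have NH : forall x y, x \in H' -> y \notin H' -> x != y.
  by move=> x y xH yH; apply: contraNneq yH => <-.
have a2H : a2 \notin H' by apply: contra Out2 => /Hst; rewrite Hinv.
have b2H : b2 \in H' by exact: In2.
have t1t2 : t1 != t2.
  apply: contraNneq (D r1 r2 (leqnn _) (leqnn _)) => E.
  by apply/eqP; apply: (@perm_inj _ sigma); rewrite -!permSr.
have Hs2 : forall x, g_sigma G2 x = tperm h2 t2 (sigma (tperm b2 a2 x)).
  by move=> x; rewrite /= !permM.
have A1 : forall i, (i <= r1.+1)%N -> (g_sigma G2 ^+ i)%g h1 = (sigma ^+ i)%g h1.
  apply: iter_agree => i lt; rewrite Hs2.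
  have iH := In1 i lt.
  have Nb : b2 != (sigma ^+ i)%g h1 by rewrite eq_sym D.
  have Na : a2 != (sigma ^+ i)%g h1 by rewrite eq_sym NH.
  rewrite (tpermD Nb Na) -permSr.
  have h2H : h2 \in H' by have := In2 0 isT; rewrite expg0 perm1.
  move: lt; rewrite leq_eqVlt => /orP [/eqP Ei | lt].
    by rewrite Ei -/t1 tpermD // ?(NH _ _ h2H Out1) // eq_sym.
  rewrite ltnS in lt; have iH' := In1 _ lt.
  rewrite tpermD //; last by rewrite eq_sym NH.
  by move: (D _ 0 lt isT); rewrite expg0 perm1 eq_sym.
have h2H : h2 \in H' by have := In2 0 isT; rewrite expg0 perm1.
have h1H : h1 \in H' by have := In1 0 isT; rewrite expg0 perm1.
split => //.
- have n1 : h2 != h1 by move: (D 0 0 isT isT); rewrite !expg0 !perm1 eq_sym.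
  have n2 : t2 != h1 by rewrite eq_sym NH.
  by rewrite /= !invMg !tpermV !permM -/t2 (tpermD n1 n2).
- apply/setP => x; rewrite !inE; apply: eq_existsb => i.
  by rewrite A1 // ltnW // ltn_ord.
apply: eq_bigr => i _; rewrite A1 ?(ltnW (ltn_ord i)) //= ffunE.
have le : (i <= r1)%N by rewrite -ltnS ltn_ord.
have yH := In1 _ le.
rewrite -/t2 -/a2 -/b2 -/c2.
rewrite (negbTE (NH _ _ yH a2H)) (negbTE (D _ _ le (leqnn _))) (negbTE (NH _ _ yH C2)).
by [].
Qed.

Theorem proposition3p15 (H : finType) (iota sigma : {perm H})
    (m : {ffun H -> nat}) (d : {ffun H -> 'Z_2}) (H' : {set H})
    (h1 h2 : H) (r1 r2 : nat) :
  is_skew_brauer iota sigma m ->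
  (forall x, x \in H' -> iota x \in H') ->
  is_maximal_sector sigma H' h1 r1 ->
  is_maximal_sector sigma H' h2 r2 ->
  (h1, r1) <> (h2, r2) ->
  zero_homogeneous sigma d ->
  kauer_move (kauer_move (GSBG iota sigma m d) h2 r2) h1 r1 =
  kauer_move (kauer_move (GSBG iota sigma m d) h1 r1) h2 r2.
Proof.
move=> [Hinv _ _ _] Hst M1 M2 Hne _.
have D := sec_disj M1 M2 Hne.
have D' : forall i j, (i <= r2)%N -> (j <= r1)%N -> (sigma ^+ i)%g h2 != (sigma ^+ j)%g h1.
  by move=> i j ? ?; rewrite eq_sym D.
set G := GSBG iota sigma m d.
have [A1 A2 A3 A4] := other_sector (G:=G) Hinv Hst M1 M2 D.
have [B1 B2 B3 B4] := other_sector (G:=G) Hinv Hst M2 M1 D'.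
rewrite !kauer_moveE.
rewrite (A1 r1.+1 (leqnn _)) (A1 r1 (leqnSn _)) A2 A3 A4.
rewrite (B1 r2.+1 (leqnn _)) (B1 r2 (leqnSn _)) B2 B3 B4.
case: M1 => [[In1 Out1] C1]; case: M2 => [[In2 Out2] C2].
have NH : forall x y, x \in H' -> y \notin H' -> x != y.
  by move=> x y xH yH; apply: contraNneq yH => <-.
have aH : forall t, t \notin H' -> iota t \notin H'.
  by move=> t tH; apply: contra tH => /Hst; rewrite Hinv.
have segH : forall h r, (forall i, (i <= r)%N -> (sigma ^+ i)%g h \in H') ->
  forall x, x \in [set x | [exists i : 'I_r.+1, x == (sigma ^+ i)%g h]] -> x \in H'.
  move=> h r In x; rewrite inE => /existsP [i /eqP ->]; apply: In.
  by rewrite -ltnS ltn_ord.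
have h1H : h1 \in H' by have := In1 0 isT; rewrite expg0 perm1.
have h2H : h2 \in H' by have := In2 0 isT; rewrite expg0 perm1.
have b1H := In1 r1 (leqnn _).
have b2H := In2 r2 (leqnn _).
have a1H := aH _ Out1.
have a2H := aH _ Out2.
have t12 : (sigma ^+ r1.+1)%g h1 != (sigma ^+ r2.+1)%g h2.
  apply: contraNneq (D r1 r2 (leqnn _) (leqnn _)) => E.
  by apply/eqP; apply: (@perm_inj _ sigma); rewrite -!permSr.
have h12 : h1 != h2 by move: (D 0 0 isT isT); rewrite !expg0 !perm1.
apply: km_comm => /=.
- split; first exact: D; first exact: NH; first by rewrite eq_sym NH.
  by apply: contra t12 => /eqP E; apply/eqP; apply: (@perm_inj _ iota).
- split => //; first exact: NH; first by rewrite eq_sym NH.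
- split.
  + by apply: contra a1H; apply: segH.
  + by apply: contra a2H; apply: segH.
  move=> x; rewrite !inE => /existsP [i /eqP ->]; apply/existsP => [[j /eqP]].
  by apply/eqP; apply: D; rewrite -ltnS ltn_ord.
- split; first by rewrite eq_sym NH.
  + by rewrite eq_sym NH.
  + by rewrite eq_sym NH.
  + by rewrite eq_sym NH.
- split; first by rewrite eq_sym NH.
  + by rewrite eq_sym NH.
  by apply: contra h12 => /eqP E; apply/eqP; apply: (@perm_inj _ sigma^-1%g).
Qed.
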